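(* Let $n,m$ be positive integers. If the $n\times m$ board has a closed knight tour, then for all positive integers $p_1,\dots,p_r$ the $n\times m\times p_1\times\cdots\times p_r$ board has a closed knight tour.
   Context: For positive integers $n_1,\dots,n_d$, the $n_1\times\cdots\times n_d$ board is $\{1,\dots,n_1\}\times\cdots\times\{1,\dots,n_d\}\subset\mathbb{Z}^d$. A knight move is a vector in $\mathbb{Z}^d$ with exactly one coordinate in $\{\pm1\}$, exactly one coordinate in $\{\pm2\}$ and all other coordinates $0$; two cells are adjacent iff their difference is a knight move. A closed knight tour is a Hamiltonian cycle in this graph. *)

(* Defs.v *)
From mathcomp Require Import all_boot all_order all_algebra.
Set Implicit Arguments. Unset Strict Implicit. Unset Printing Implicit Defensive.
Import Order.TTheory GRing.Theory Num.Theory.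
Local Open Scope ring_scope.

Definition cell := seq int.

Definition on_board (ns : seq nat) (x : cell) : bool :=
  (size x == size ns) &&
  all2 (fun (a : int) (n : nat) => (1 <= a) && (a <= n%:Z)) x ns.

Definition knight_move (v : seq int) : bool :=
  [&& count (fun a : int => `|a| == 1) v == 1%N,
      count (fun a : int => `|a| == 2) v == 1%N &
      count (fun a : int => a != 0) v == 2%N].

Definition knight_adj (x y : cell) : bool :=
  (size x == size y) && knight_move [seq p.1 - p.2 | p <- zip x y].

Definition closed_knight_tour (ns : seq nat) : Prop :=
  exists c : seq cell,
    [/\ uniq c, (3 <= size c)%N, (forall x, (x \in c) = on_board ns x)
      & cycle knight_adj c].

(* Main.v *)
Require Import Defs.
From mathcomp Require Import all_boot all_order all_algebra.
From mathcomp Require Import zify.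
Set Implicit Arguments. Unset Strict Implicit. Unset Printing Implicit Defensive.
Import Order.TTheory GRing.Theory Num.Theory.
Local Open Scope ring_scope.


Definition D (x y : cell) : seq int := [seq p.1 - p.2 | p <- zip x y].
Definition c1 (v : seq int) := count (fun a : int => `|a| == 1) v.
Definition c2 (v : seq int) := count (fun a : int => `|a| == 2) v.
Definition cz (v : seq int) := count (fun a : int => a != 0) v.

Lemma kmE v : knight_move v = [&& c1 v == 1, c2 v == 1 & cz v == 2]%N.
Proof. by []. Qed.

Definition twostep (x y : cell) :=
  [&& size x == size y, c1 (D x y) == 0, c2 (D x y) == 1 & cz (D x y) == 1]%N.
Definition unitr (x y : cell) :=
  [&& size x == size y, c1 (D x y) == 1, c2 (D x y) == 0 & cz (D x y) == 1]%N.

Lemma D_cat x y q q' : size x = size y -> D (x ++ q) (y ++ q') = D x y ++ D q q'.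
Proof. by move=> h; rewrite /D zip_cat // map_cat. Qed.

Lemma adj_cat x y q q' : size x = size y -> size q = size q' ->
  knight_adj (x ++ q) (y ++ q') = knight_move (D x y ++ D q q').
Proof.
move=> hx hq; rewrite /knight_adj -/(D (x ++ q) (y ++ q')) D_cat //.
by rewrite !size_cat hx hq eqxx.
Qed.

Lemma D_same (q : cell) : D q q = nseq (size q) 0.
Proof. by elim: q => // a q IH; rewrite /D /= -/(D q q) subrr IH. Qed.

Lemma adj_layer x y q : knight_adj x y -> knight_adj (x ++ q) (y ++ q).
Proof.
move=> h; have hs : size x = size y by move: h => /andP[/eqP].
rewrite adj_cat // D_same kmE.
move: h; rewrite /knight_adj -/(D x y) kmE => /andP[_].
by rewrite /c1 /c2 /cz !count_cat !count_nseq /= !mul0n !addn0.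
Qed.

Lemma adj_cross x y q q' : twostep x y -> unitr q q' -> knight_adj (x ++ q) (y ++ q').
Proof.
move=> /and4P[/eqP hs /eqP h1 /eqP h2 /eqP h3] /and4P[/eqP hs' /eqP k1 /eqP k2 /eqP k3].
rewrite adj_cat // kmE.
move: h1 h2 h3 k1 k2 k3; rewrite /c1 /c2 /cz !count_cat => -> -> -> -> -> ->.
by [].
Qed.

Lemma D_sym x y : D y x = map -%R (D x y).
Proof.
elim: x y => [|a x IH] [|b y] //=.
by rewrite /D /= -/(D y x) IH opprB.
Qed.

Lemma cnts_opp v : [/\ c1 (map -%R v) = c1 v, c2 (map -%R v) = c2 v & cz (map -%R v) = cz v].
Proof.
rewrite /c1 /c2 /cz !count_map; split; apply: eq_count => a /=;
by rewrite ?normrN ?oppr_eq0.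
Qed.

Lemma adj_sym x y : knight_adj x y = knight_adj y x.
Proof.
rewrite /knight_adj -/(D x y) -/(D y x) [D y x]D_sym eq_sym !kmE.
by case: (cnts_opp (D x y)) => -> -> ->.
Qed.

Lemma twostep_sym x y : twostep x y = twostep y x.
Proof.
rewrite /twostep [D y x]D_sym eq_sym.
by case: (cnts_opp (D x y)) => -> -> ->.
Qed.

Lemma unitr_sym x y : unitr x y = unitr y x.
Proof.
rewrite /unitr [D y x]D_sym eq_sym.
by case: (cnts_opp (D x y)) => -> -> ->.
Qed.

Lemma merge_cycle (T : eqType) (e : rel T) (b a c d : T) X1 Y1 :
  cycle e (b :: X1 ++ [:: a]) -> cycle e (c :: Y1 ++ [:: d]) -> e a c -> e d b ->
  cycle e ((b :: X1 ++ [:: a]) ++ (c :: Y1 ++ [:: d])).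
Proof.
move=> H1 H2 h3 h4; move: H1 H2.
rewrite /= !rcons_path !cat_path !last_cat /= !andbT.
move=> /andP[/andP[-> ->] _] /andP[/andP[p1 p2] _].
by rewrite h3 cat_path /= p1 p2 last_cat /= h4.
Qed.


Definition lyr (q : cell) (s : seq cell) := map (fun w => w ++ q) s.
Definition FQ (L : seq cell) (Q : seq cell) := flatten (map (fun q => lyr q L) Q).

Lemma lift_cycle q L : cycle knight_adj L -> cycle knight_adj (lyr q L).
Proof. by apply: homo_cycle => u v; apply: adj_layer. Qed.

Lemma build (a b c d x y : cell) (U V : seq cell) :
  cycle knight_adj (c :: U ++ x :: y :: V ++ [:: d]) ->
  twostep a c -> twostep d b -> (x = a /\ y = b) \/ (x = b /\ y = a) ->
  forall q Q, sorted unitr (q :: Q) ->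
  exists M Z, [/\ Z = (y ++ q) :: M ++ [:: x ++ q],
     perm_eq Z (FQ (c :: U ++ x :: y :: V ++ [:: d]) (q :: Q))
         & cycle knight_adj Z].
Proof.
set L := c :: _ => HL Hac Hdb Hxy q Q.
set A := fun q => (c ++ q) :: lyr q U ++ [:: x ++ q].
set B := fun q => (y ++ q) :: lyr q V ++ [:: d ++ q].
have eL : forall q, lyr q L = A q ++ B q.
  by move=> q0; rewrite /L /lyr /A /B /= map_cat /= map_cat /= -catA.
elim: Q q => [|q' Q IH] q Hs.
  exists (lyr q V ++ (d ++ q) :: (c ++ q) :: lyr q U), (B q ++ A q).
  have -> : FQ L [:: q] = lyr q L by rewrite /FQ /= cats0.
  split; first by rewrite /A /B /= -!catA.
    by rewrite eL perm_catC.
  by rewrite cycle_catC -eL lift_cycle.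
move: Hs => /= /andP[Hqq' Hs].
have [M0 [Z0 [-> HP0 HC0]]] := IH q' Hs.
have [M1 [HP1 HC1]] : exists M1, perm_eq ((b ++ q') :: M1 ++ [:: a ++ q'])
                    (FQ L (q' :: Q)) /\ cycle knight_adj ((b ++ q') :: M1 ++ [:: a ++ q']).
  case: Hxy => [[ex ey]|[ex ey]]; first by exists M0; rewrite -ex -ey.
  exists (rev M0); move: HP0 HC0; rewrite ex ey => HP0 HC0.
  have er : (b ++ q') :: rev M0 ++ [:: a ++ q'] = rev ((a ++ q') :: M0 ++ [:: b ++ q']).
    by rewrite rev_cons rev_cat /= cats1.
  rewrite er; split; first by apply: perm_trans HP0; rewrite perm_rev.
  have ee : (fun z => knight_adj^~ z) =2 knight_adj by move=> u v /=; rewrite adj_sym.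
  by rewrite rev_cycle (eq_cycle ee).
set X := (b ++ q') :: M1 ++ [:: a ++ q'].
exists (lyr q V ++ (d ++ q) :: X ++ (c ++ q) :: lyr q U), (B q ++ (X ++ A q)).
split.
- by rewrite /A /B /= -!catA /= -!catA.
- have -> : FQ L (q :: q' :: Q) = lyr q L ++ FQ L (q' :: Q) by [].
  rewrite eL; move: (FQ L (q' :: Q)) HP1 => F HP1.
  apply/permP => p; rewrite !count_cat -/X (permP HP1 p); lia.
rewrite cycle_catC -catA -eL.
have eL2 : lyr q L = (c ++ q) :: (lyr q U ++ (x ++ q) :: (y ++ q) :: lyr q V) ++ [:: d ++ q].
  by rewrite /L /lyr /= map_cat /= map_cat /= -!catA.
have HLq : cycle knight_adj ((c ++ q) :: (lyr q U ++ (x ++ q) :: (y ++ q) :: lyr q V) ++ [:: d ++ q]).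
  by rewrite -eL2 lift_cycle.
rewrite eL2.
rewrite /X; apply: merge_cycle => //.
- by apply: adj_cross => //; rewrite unitr_sym.
- exact: adj_cross.
Qed.


Lemma mem_FQ (L Q : seq cell) (z : cell) :
  reflect (exists w q, [/\ w \in L, q \in Q & z = w ++ q]) (z \in FQ L Q).
Proof.
apply: (iffP flattenP) => [[s /mapP[q Hq ->] /mapP[w Hw ->]]|[w [q [Hw Hq ->]]]].
  by exists w, q.
by exists (lyr q L); [apply/mapP; exists q | apply/mapP; exists w].
Qed.

Lemma FQ_uniq (L Q : seq cell) : uniq L -> all (fun w : cell => size w == 2)%N L -> uniq Q ->
  uniq (FQ L Q).
Proof.
move=> uL sL; elim: Q => [|q Q IH] //= /andP[qQ uQ].
rewrite cat_uniq IH // andbT; apply/andP; split.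
  rewrite map_inj_in_uniq // => w w' Hw Hw' /eqP.
  move: sL => /allP sL.
  by rewrite eqseq_cat ?(eqP (sL _ Hw)) ?(eqP (sL _ Hw')) // eqxx andbT => /eqP.
apply/hasP => -[z /mem_FQ [w [q' [Hw Hq' ->]]]] /mapP [w' Hw' /eqP].
move: sL => /allP sL.
rewrite eqseq_cat ?(eqP (sL _ Hw)) ?(eqP (sL _ Hw')) // => /andP[_ /eqP e].
by move: qQ; rewrite -e Hq'.
Qed.


Lemma unitr_cons (i : int) u v : unitr (i :: u) (i :: v) = unitr u v.
Proof. by rewrite /unitr /D /= subrr. Qed.

Lemma unitr_step (i : int) (u : cell) : unitr (i :: u) ((i + 1) :: u).
Proof.
rewrite /unitr /= eqxx /= -/(D u u) D_same /D /c1 /c2 /cz /= !count_nseq /=.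
have -> : i - (i + 1) = -1 by rewrite opprD addrA subrr add0r.
by rewrite normrN normr1.
Qed.

Lemma sorted_glue (T : Type) (e : rel T) (x : T) s1 s2 :
  sorted e s1 -> sorted e s2 -> e (last x s1) (head x s2) ->
  s1 <> [::] -> s2 <> [::] -> sorted e (s1 ++ s2).
Proof.
case: s1 => // a s1; case: s2 => // b s2 /= h1 h2 h3 _ _.
by rewrite cat_path h1 /= h3 h2.
Qed.

Lemma last_rev (T : Type) (x : T) s : last x (rev s) = head x s.
Proof. by case: s => //= y s; rewrite rev_cons last_rcons. Qed.

Lemma head_rev (T : Type) (x : T) s : head x (rev s) = last x s.
Proof. by case/lastP: s => // s y; rewrite rev_rcons last_rcons. Qed.

Lemma sorted_rev_unitr s : sorted unitr s -> sorted unitr (rev s).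
Proof.
rewrite rev_sorted; apply: sub_sorted => u v /=; by rewrite unitr_sym.
Qed.

Lemma sorted_cons_map (i : int) s : sorted unitr s -> sorted unitr (map (cons i) s).
Proof. by rewrite sorted_map; apply: sub_sorted => u v /=; rewrite unitr_cons. Qed.

Definition inblk (k : nat) (S : seq cell) (z : cell) : bool :=
  if z is i :: w then (1 <= i <= k%:Z) && (w \in S) else false.

Lemma blocks (S : seq cell) : S != [::] -> uniq S -> sorted unitr S ->
  forall k, exists T e, [/\ T <> [::], uniq T, sorted unitr T,
    (forall z, z \in T = inblk k.+1 S z) &
    last [::] T = k.+1%:Z :: e /\ (e = head [::] S \/ e = last [::] S)].
Proof.
move=> S0 uS sS; elim=> [|k [T [e [T0 uT sT mT [lT he]]]]].
  exists (map (cons 1) S), (last [::] S); split.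
  - by case: S S0 {uS sS}.
  - by rewrite map_inj_uniq // => u v [].
  - exact: sorted_cons_map.
  - case=> [|i w] /=; first by apply/mapP => -[].
    apply/mapP/andP => [[w' Hw' [-> ->]]|[Hi Hw]]; first by split.
    by exists w => //; congr (_ :: _); lia.
  - by case: S S0 {uS sS} => // s0 S' _ /=; rewrite (last_map (cons 1)); split=> //; right.
set S' := if e == head [::] S then S else rev S.
have hS' : head [::] S' = e.
  rewrite /S'; case: eqP => // ne; rewrite head_rev; by case: he.
have lS' : last [::] S' = head [::] S \/ last [::] S' = last [::] S.
  by rewrite /S'; case: eqP => _; [right | left; rewrite last_rev].
have mS' : S' =i S by move=> w; rewrite /S'; case: eqP => _ //; rewrite mem_rev.
have S'0 : S' <> [::].
  move: S0; rewrite /S'; case: ifP => _; first by move=> /eqP.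
  by move=> h; apply/eqP; rewrite -size_eq0 size_rev size_eq0.
have uS' : uniq S' by rewrite /S'; case: eqP => _ //; rewrite rev_uniq.
have sS' : sorted unitr S' by rewrite /S'; case: eqP => _ //; apply: sorted_rev_unitr.
exists (T ++ map (cons k.+2%:Z) S'), (last [::] S'); split.
- by case: (T) T0.
- rewrite cat_uniq uT map_inj_uniq ?uS' ?andbT; last by move=> u v [].
  apply/hasP => -[z /mapP[w _ ->]]; rewrite mT /=; lia.
- apply: (@sorted_glue _ _ [::]) => //; last by case: (S') S'0.
  + exact: sorted_cons_map.
  + rewrite lT; case: (S') hS' S'0 => // s S2 /= ->.
    have -> : k.+2%:Z = k.+1%:Z + 1 by lia.
    by move=> _; apply: unitr_step.
- case=> [|i w]; rewrite mem_cat mT /=; first by apply/mapP => -[].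
  apply/idP/idP.
  + case/orP => [/andP[hi ->]|/mapP[w' Hw' [-> ->]]]; first by rewrite andbT; lia.
    by rewrite -mS' Hw' andbT; lia.
  + move=> /andP[hi hw]; case: (boolP (i <= k.+1%:Z)) => hk.
      by rewrite hw andbT; apply/orP; left; lia.
    apply/orP; right; apply/mapP; exists w; first by rewrite mS'.
    by congr (_ :: _); lia.
- split; last by case: lS' => ->; [left | right].
  rewrite last_cat; case: (S') S'0 => // s S2 _ /=.
  by rewrite (last_map (cons k.+2%:Z)).
Qed.

Lemma snake (ps : seq nat) : all (fun p => 0 < p)%N ps ->
  exists Q : seq cell, [/\ Q != [::], uniq Q, sorted unitr Q &
    forall z, z \in Q = on_board ps z].
Proof.
elim: ps => [|p ps IH].
  move=> _; exists [:: [::]]; split => // z.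
  by rewrite inE; case: z.
case: p => // k /= /IH [S [S0 uS sS mS]].
have [T [e [T0 uT sT mT _]]] := blocks S0 uS sS k.
exists T; split => //; first by case: (T) T0.
case=> [|i w]; rewrite mT //=.
by rewrite mS /on_board /= andbCA.
Qed.


Lemma nbr_a (n m : nat) (y : cell) : on_board [:: n; m] y -> knight_adj [:: 1; 1] y ->
  y = [:: 2; 3] \/ y = [:: 3; 2].
Proof.
case: y => [|y1 [|y2 [|? ?]]] //; rewrite /on_board /= => /andP[/andP[h1 _] /andP[/andP[h2 _] _]].
rewrite /knight_adj kmE /c1 /c2 /cz /D /= => /and3P[/eqP e1 /eqP e2 /eqP e3].
have : ((y1 == 2) && (y2 == 3)) || ((y1 == 3) && (y2 == 2)) by lia.
by case/orP => /andP[/eqP -> /eqP ->]; [left | right].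
Qed.

Lemma nbr_c (n m : nat) (y : cell) : on_board [:: n; m] y -> knight_adj [:: 1; 3] y ->
  [\/ y = [:: 2; 1], y = [:: 2; 5], y = [:: 3; 2] | y = [:: 3; 4]].
Proof.
case: y => [|y1 [|y2 [|? ?]]] //; rewrite /on_board /= => /andP[/andP[h1 _] /andP[/andP[h2 _] _]].
rewrite /knight_adj kmE /c1 /c2 /cz /D /= => /and3P[/eqP e1 /eqP e2 /eqP e3].
have : [|| (y1 == 2) && (y2 == 1), (y1 == 2) && (y2 == 5), (y1 == 3) && (y2 == 2)
        | (y1 == 3) && (y2 == 4)] by lia.
by case/or4P => /andP[/eqP -> /eqP ->]; [apply: Or41|apply: Or42|apply: Or43|apply: Or44].
Qed.

Lemma rot_nbrs (C : seq cell) v : (3 <= size C)%N -> cycle knight_adj C -> v \in C ->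
  exists t h l t', [/\ perm_eq (v :: t) C, cycle knight_adj (v :: t),
     t = h :: rcons t' l, knight_adj v h & knight_adj l v].
Proof.
move=> sC cC vC; case: (rot_to vC) => i t e.
have st : (2 <= size t)%N by move: sC; rewrite -(size_rot i) e.
have cR : cycle knight_adj (v :: t) by rewrite -e rot_cycle.
case: t st e cR => [|h t1] // st e cR.
case/lastP: t1 st e cR => [|t' l] // st e cR.
exists (h :: rcons t' l), h, l, t'; split => //.
- by rewrite -e perm_rot.
- by move: cR => /= /andP[].
- by move: cR; rewrite /= rcons_path last_rcons => /andP[_ /andP[_ ->]].
Qed.

Lemma decomp (T : eqType) (c p a s d b : T) U1 V1 : last s V1 = d ->
  (b = p \/ b = s) -> b <> d ->
  exists U V x y, c :: U1 ++ p :: a :: s :: V1 = c :: U ++ x :: y :: V ++ [:: d] /\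
     ((x = a /\ y = b) \/ (x = b /\ y = a)).
Proof.
move=> ld [->|->] bd.
  exists U1, (belast s V1), p, a; split; last by right.
  by rewrite -ld cats1 -lastI.
case: V1 ld => [/= sd|v V1 ld]; first by rewrite sd in bd.
exists (rcons U1 p), (belast v V1), a, s; split; last by left.
by rewrite cat_rcons -ld /= cats1 -lastI.
Qed.

Lemma adj_mid (c p a s : cell) X Y : cycle knight_adj (c :: X ++ p :: a :: s :: Y) ->
  knight_adj p a /\ knight_adj a s.
Proof.
rewrite /= rcons_path cat_path /= => /andP[/andP[_ /andP[_ /andP[h1 /andP[h2 _]]]] _]; by split.
Qed.

Lemma last_rev' (T : Type) (x : T) s : last x (rev s) = head x s.
Proof. by case: s => //= y s; rewrite rev_cons last_rcons. Qed.

Lemma twoD (n m : nat) (C : seq cell) : (0 < n)%N -> (0 < m)%N -> uniq C ->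
  (3 <= size C)%N -> (forall x, (x \in C) = on_board [:: n; m] x) ->
  cycle knight_adj C ->
  exists a b c d x y U V,
    [/\ cycle knight_adj (c :: U ++ x :: y :: V ++ [:: d]),
        perm_eq (c :: U ++ x :: y :: V ++ [:: d]) C, twostep a c, twostep d b &
        (x = a /\ y = b) \/ (x = b /\ y = a)].
Proof.
move=> n0 m0 uC sC mC cC.
have aC : ([:: 1; 1] : cell) \in C by rewrite mC /on_board /=; lia.
have m3 : (3 <= m)%N.
  have [t [h [l [t' [pR cR et ah la]]]]] := rot_nbrs sC cC aC.
  have uR : uniq ([:: 1; 1] :: t) by rewrite (perm_uniq pR).
  have hC : h \in C by rewrite -(perm_mem pR) et !inE eqxx orbT.
  have lC : l \in C by rewrite -(perm_mem pR) et !inE mem_rcons inE eqxx !orbT.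
  have hl : h <> l.
    move=> ehl; move: uR; rewrite et /= => /andP[_ /andP[/negP hn _]].
    by apply: hn; rewrite mem_rcons inE ehl eqxx.
  have hB : on_board [:: n; m] h by rewrite -mC.
  have lB : on_board [:: n; m] l by rewrite -mC.
  rewrite adj_sym in la.
  have [eh | eh] := nbr_a hB ah; first by move: hB; rewrite eh /on_board /=; lia.
  have [el | el] := nbr_a lB la; first by move: lB; rewrite el /on_board /=; lia.
  by case: hl; rewrite eh el.
have cC' : ([:: 1; 3] : cell) \in C by rewrite mC /on_board /=; lia.
have [t [h [l [t' [pR cR et ch lc]]]]] := rot_nbrs sC cC cC'.
have uR : uniq ([:: 1; 3] :: t) by rewrite (perm_uniq pR).
have hl : h <> l.
  move=> ehl; move: uR; rewrite et /= => /andP[_ /andP[/negP hn _]].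
  by apply: hn; rewrite mem_rcons inE ehl eqxx.
have hB : on_board [:: n; m] h.
  by rewrite -mC -(perm_mem pR) et !inE eqxx orbT.
have lB : on_board [:: n; m] l.
  by rewrite -mC -(perm_mem pR) et !inE mem_rcons inE eqxx !orbT.
rewrite adj_sym in lc.
have aT : ([:: 1; 1] : cell) \in t.
  by move: aC; rewrite -(perm_mem pR) inE.
have [T1 [T2 et2]] : exists T1 T2, t = T1 ++ [:: 1; 1] :: T2.
  by case/splitPr: aT => T1 T2; exists T1, T2.
have [U1 [p eT1]] : exists U1 p, T1 = rcons U1 p.
  case/lastP: T1 et2 => [|U1 p] et2; last by exists U1, p.
  by move: et2 ch; rewrite et /= => -[-> _].
have [s [V1 eT2]] : exists s V1, T2 = s :: V1.
  case: T2 et2 => [|s V1] et2; last by exists s, V1.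
  have : last [::] t = l by rewrite et /= last_rcons.
  by rewrite et2 last_cat /= => el; move: lc; rewrite -el.
rewrite eT1 eT2 cat_rcons in et2.
have cR2 := cR; rewrite et2 in cR2.
have [pa as_] := adj_mid cR2.
have pB : on_board [:: n; m] p by rewrite -mC -(perm_mem pR) et2 !inE mem_cat inE eqxx !orbT.
have sB : on_board [:: n; m] s by rewrite -mC -(perm_mem pR) et2 !inE mem_cat !inE eqxx !orbT.
have ps : p <> s.
  move=> eps; move: uR; rewrite et2 /= cat_uniq => /andP[_ /and3P[_ _ /=]].
  by rewrite !inE eps eqxx orbT.
rewrite adj_sym in pa.
have Hps : (p = [:: 2; 3] /\ s = [:: 3; 2]) \/ (p = [:: 3; 2] /\ s = [:: 2; 3]).
  case: (nbr_a pB pa) => ep; case: (nbr_a sB as_) => es; rewrite ep es in ps *;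
  first [by left | by right | by case: ps].
have [d [Hd1 Hd2]] : exists d : cell, (d = h \/ d = l) /\
     [\/ d = [:: 2; 1], d = [:: 2; 5] | d = [:: 3; 4]].
  case: (nbr_c hB ch) => eh.
  - by exists h; split; [left|apply: Or31].
  - by exists h; split; [left|apply: Or32].
  - case: (nbr_c lB lc) => el.
    + by exists l; split; [right|apply: Or31].
    + by exists l; split; [right|apply: Or32].
    + by case: hl; rewrite eh el.
    + by exists l; split; [right|apply: Or33].
  - by exists h; split; [left|apply: Or33].
have [b [Hb1 Hb2 Hb3]] : exists b : cell, [/\ b = p \/ b = s, b <> d & twostep d b].
  case: Hd2 => ->; [exists [:: 2; 3] | exists [:: 2; 3] | exists [:: 3; 2]];
  (split => //; case: Hps => [[-> ->]|[-> ->]]; by auto).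
have fin : forall R, perm_eq R C -> cycle knight_adj R -> forall U1 p s V1,
    R = [:: 1; 3] :: U1 ++ p :: [:: 1; 1] :: s :: V1 -> last s V1 = d ->
    (b = p \/ b = s) ->
    exists a b c d x y U V,
    [/\ cycle knight_adj (c :: U ++ x :: y :: V ++ [:: d]),
        perm_eq (c :: U ++ x :: y :: V ++ [:: d]) C, twostep a c, twostep d b &
        (x = a /\ y = b) \/ (x = b /\ y = a)].
  move=> R pRC cRC U2 p2 s2 V2 eR ld hb.
  have [U [V [x [y [eR2 hxy]]]]] := @decomp _ [:: 1; 3] p2 [:: 1; 1] s2 d b U2 V2 ld hb Hb2.
  by exists [:: 1; 1], b, [:: 1; 3], d, x, y, U, V; rewrite -eR2 -eR.
case: Hd1 => ed.
- apply: (fin ([:: 1; 3] :: rev t) _ _ (rev V1) s p (rev U1)).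
  + by apply: perm_trans pR; rewrite perm_cons perm_rev.
  + have ee : (fun z => knight_adj^~ z) =2 knight_adj by move=> u v /=; rewrite adj_sym.
    by rewrite -cat1s cycle_catC cats1 -rev_cons rev_cycle (eq_cycle ee).
  + by rewrite et2 rev_cat !rev_cons -!cats1 -!catA.
  + rewrite last_rev' ed; move: et; rewrite et2.
    by case: (U1) => [|u U3] /= [->].
  + by case: Hb1; auto.
- apply: (fin ([:: 1; 3] :: t) _ _ U1 p s V1) => //.
  + by rewrite et2.
  + have : last [::] t = l by rewrite et /= last_rcons.
    by rewrite et2 last_cat /= ed.
Qed.


Lemma ob_cat (n m : nat) ps (w q : cell) : on_board [:: n; m] w ->
  on_board (n :: m :: ps) (w ++ q) = on_board ps q.
Proof.
case: w => [|w1 [|w2 [|? ?]]] //; rewrite /on_board /=.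
by case/and3P => -> -> _ /=. 
Qed.

Lemma ob_split (n m : nat) ps (z : cell) : on_board (n :: m :: ps) z ->
  exists w q, [/\ z = w ++ q, on_board [:: n; m] w & on_board ps q].
Proof.
case: z => [|z1 [|z2 q]] //; rewrite /on_board /= => /and4P[hs h1 h2 ha].
by exists [:: z1; z2], q; rewrite /= h1 h2 ha; move: hs => /eqP [->]; rewrite eqxx.
Qed.

Local Close Scope ring_scope.

Theorem corollary4p3 (n m : nat) :
  (0 < n)%N -> (0 < m)%N ->
  closed_knight_tour [:: n; m] ->
  forall ps : seq nat, all (fun p => 0 < p)%N ps ->
  closed_knight_tour (n :: m :: ps).
Proof.
move=> n0 m0 [C [uC sC mC cC]] ps hps.
have [a [b [c [d [x [y [U [V [cL pL Hac Hdb Hxy]]]]]]]]] := twoD n0 m0 uC sC mC cC.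
have [Q [Q0 uQ sQ mQ]] := snake hps.
case: Q Q0 uQ sQ mQ => [|q Q] // _ uQ sQ mQ.
have [M [Z [eZ pZ cZ]]] := build cL Hac Hdb Hxy sQ.
set L := c :: U ++ x :: y :: V ++ [:: d].
have mL : forall w, (w \in L) = on_board [:: n; m] w by move=> w; rewrite (perm_mem pL) mC.
exists Z; split => //.
- rewrite (perm_uniq pZ) FQ_uniq //; first by rewrite (perm_uniq pL).
  by apply/allP => w; rewrite mL; case: w => [|? [|? [|? ?]]].
- rewrite (perm_size pZ).
  have -> : FQ L (q :: Q) = lyr q L ++ FQ L Q by [].
  by rewrite size_cat size_map (perm_size pL); apply: leq_trans sC (leq_addr _ _).
- move=> z; rewrite (perm_mem pZ); apply/mem_FQ/idP.
    by move=> [w [q' [Hw Hq' ->]]]; rewrite ob_cat -?mL // -mQ.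
  move/ob_split => [w [q' [-> hw hq]]]; exists w, q'; split => //.
    by rewrite mL.
  by rewrite mQ.
Qed.
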